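(* Let $D$ be the clover-improved Wilson Dirac operator, let $\{\mathcal{A}_1,\dots,\mathcal{A}_s\}$ be a $\Gamma_5$-compatible aggregation, let $P$ be the corresponding aggregation-based prolongation built from test vectors $v_1,\dots,v_N$ (as in the context), and let $R=(\Gamma_5P)^H$. Consider the two coarse grid operators $D_c^{PG}=RDP$ and $D_c=P^HDP$. Then: (i) $D_c=\Gamma_5^cD_c^{PG}$; (ii) $I-PD_c^{-1}P^HD=I-P(D_c^{PG})^{-1}RD$ (whenever these inverses exist); (iii) $D_c^{PG}$ is hermitian, and $D_c$ is $\Gamma_5^c$-symmetric, i.e. $(\Gamma_5^cD_c)^H=\Gamma_5^cD_c$; (iv) for the fields of values, $\mathcal{F}(D_c)\subseteq\mathcal{F}(D)$, where $\mathcal{F}(A)=\{\psi^HA\psi:\psi^H\psi=1\}$.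
   Context: Let $\mathcal{L}$ be a periodic four-dimensional $N_t\times N_s^3$ lattice with $n_{\mathcal{L}}$ sites and shift vectors $\hat\mu$ ($\mu=0,\dots,3$, spacing $a$). Let $\mathcal{C}=\{1,2,3\}$ (colors), $\mathcal{S}=\{0,1,2,3\}$ (spins), and $\mathcal{V}=\mathcal{L}\times\mathcal{C}\times\mathcal{S}$ the set of $n=12n_{\mathcal{L}}$ variables; vectors in $\mathbb{C}^n$ are fields $\psi(x)\in\mathbb{C}^4\otimes\mathbb{C}^3$. A configuration consists of $U_\mu(x)\in\mathrm{SU}(3)$. The matrices $\gamma_0,\dots,\gamma_3\in\mathbb{C}^{4\times4}$ are hermitian, unitary, with $\gamma_\mu\gamma_\nu+\gamma_\nu\gamma_\mu=2\delta_{\mu\nu}I_4$, and $\gamma_5=\gamma_0\gamma_1\gamma_2\gamma_3=\mathrm{diag}(1,1,-1,-1)$ (acting as $+1$ on spins 0,1 and $-1$ on spins 2,3). The clover-improved Wilson Dirac operator $D$ (real parameters $m_0,c_{sw}$) is $(D\psi)(x)=\Big(\tfrac{m_0+4}{a}I_{12}-\tfrac{c_{sw}}{32a}\sum_{\mu,\nu}(\gamma_\mu\gamma_\nu)\otimes(Q_{\mu\nu}(x)-Q_{\nu\mu}(x))\Big)\psi(x)-\tfrac{1}{2a}\sum_{\mu}\big((I_4-\gamma_\mu)\otimes U_\mu(x)\big)\psi(x+\hat\mu)-\tfrac{1}{2a}\sum_{\mu}\big((I_4+\gamma_\mu)\otimes U_\mu(x-\hat\mu)^H\big)\psi(x-\hat\mu)$,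 with $Q_{\mu\nu}(x)$ the sum of the four oriented plaquette products of links around $x$ in the $\mu\nu$-plane. With $\Gamma_5=I_{n_{\mathcal{L}}}\otimes\gamma_5\otimes I_3$, $D$ satisfies $(\Gamma_5D)^H=\Gamma_5D$. An aggregation is a partition $\{\mathcal{A}_1,\dots,\mathcal{A}_s\}$ of $\mathcal{V}$; it is $\Gamma_5$-compatible if each $\mathcal{A}_i$ consists exclusively of variables with spin in $\{0,1\}$ or exclusively of variables with spin in $\{2,3\}$. Given test vectors $v_1,\dots,v_N\in\mathbb{C}^n$, let $\mathcal{I}_{\mathcal{A}_i}^Tv$ denote the vector agreeing with $v$ on $\mathcal{A}_i$ and zero elsewhere. The aggregation-based prolongation $P\in\mathbb{C}^{n\times sN}$ has, for each $i$, columns $(i-1)N+1,\dots,iN$ equal to an orthonormal basis of $\mathrm{span}(\mathcal{I}_{\mathcal{A}_i}^Tv_1,\dots,\mathcal{I}_{\mathcal{A}_i}^Tv_N)$ (these restrictions being linearly independent); thus each column of $P$ is supported in a single aggregate and $P^HP=I$. $\Gamma_5^c$ is the $sN\times sN$ diagonal matrix with entry $+1$ on coarse variables belonging to aggregates of spins $\{0,1\}$ and $-1$ on those belonging to aggregates of spins $\{2,3\}$ (so that $\Gamma_5P=P\Gamma_5^c$). *)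

(* Defs.v *)
From HB Require Import structures.
From mathcomp Require Import all_boot all_order all_algebra.
Set Implicit Arguments. Unset Strict Implicit. Unset Printing Implicit Defensive.
Import Order.TTheory GRing.Theory Num.Theory.
Local Open Scope ring_scope.

Definition adjmx (C : numClosedFieldType) m n (A : 'M[C]_(m, n)) : 'M[C]_(n, m) :=
  \matrix_(i, j) (A j i)^*.

Definition site (Nt Ns : nat) : finType :=
  ('I_Nt * 'I_Ns * 'I_Ns * 'I_Ns)%type.

(* x + mu^ (b = true) and x - mu^ (b = false), periodically *)
Definition cshift (b : bool) n (i : 'I_n) : 'I_n := if b then ordS i else ord_pred i.

Definition lshift (b : bool) Nt Ns (mu : 'I_4) (x : site Nt Ns) : site Nt Ns :=
  let: (x0, x1, x2, x3) := x in
  match val mu with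
  | 0 => (cshift b x0, x1, x2, x3)
  | 1 => (x0, cshift b x1, x2, x3)
  | 2 => (x0, x1, cshift b x2, x3)
  | _ => (x0, x1, x2, cshift b x3)
  end.
Definition fwd Nt Ns mu x := @lshift true Nt Ns mu x.
Definition bwd Nt Ns mu x := @lshift false Nt Ns mu x.

Definition var (Nt Ns : nat) : finType := (site Nt Ns * 'I_3 * 'I_4)%type.
Definition vsite Nt Ns (p : var Nt Ns) : site Nt Ns := p.1.1.
Definition vcolor Nt Ns (p : var Nt Ns) : 'I_3 := p.1.2.
Definition vspin Nt Ns (p : var Nt Ns) : 'I_4 := p.2.

Definition gauge (C : numClosedFieldType) Nt Ns := site Nt Ns -> 'I_4 -> 'M[C]_3.

Definition SU3 (C : numClosedFieldType) (A : 'M[C]_3) : Prop :=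
  adjmx A *m A = 1%:M /\ \det A = 1.

(* Q_{mu nu}(x): sum of the four oriented plaquettes around x in the mu-nu plane *)
Definition Qclov (C : numClosedFieldType) Nt Ns (U : gauge C Nt Ns)
    (mu nu : 'I_4) (x : site Nt Ns) : 'M[C]_3 :=
  let f := @fwd Nt Ns in let b := @bwd Nt Ns in let H := @adjmx C 3 3 in
    U x mu *m U (f mu x) nu *m H (U (f nu x) mu) *m H (U x nu)
  + U x nu *m H (U (b mu (f nu x)) mu) *m H (U (b mu x) nu) *m U (b mu x) mu
  + H (U (b mu x) mu) *m H (U (b mu (b nu x)) nu) *m U (b mu (b nu x)) mu
      *m U (b nu x) nu
  + H (U (b nu x) nu) *m U (b nu x) mu *m U (f mu (b nu x)) nu *m H (U x mu).

Definition gamma5 (C : numClosedFieldType) : 'M[C]_4 :=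
  diag_mx (\row_(i < 4) (if (i < 2)%N then 1 else -1)).

Definition gamma_matrices (C : numClosedFieldType) (gam : 'I_4 -> 'M[C]_4) : Prop :=
  [/\ forall mu, adjmx (gam mu) = gam mu,
      forall mu, gam mu *m adjmx (gam mu) = 1%:M,
      forall mu nu, gam mu *m gam nu + gam nu *m gam mu = ((mu == nu)%:R *+ 2)%:M
    & gam 0 *m gam 1 *m gam 2 *m gam 3 = gamma5 C].

Definition Dker (C : numClosedFieldType) Nt Ns (gam : 'I_4 -> 'M[C]_4)
    (U : gauge C Nt Ns) (m0 csw a : C) (p q : var Nt Ns) : C :=
  let x := vsite p in let y := vsite q in
  let c := vcolor p in let c' := vcolor q in
  let s := vspin p in let s' := vspin q in
    (x == y)%:R *
      ((m0 + 4) / a * ((c == c') && (s == s'))%:R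
       - csw / (32 * a) *
         \sum_(mu < 4) \sum_(nu < 4)
            (gam mu *m gam nu) s s' * (Qclov U mu nu x - Qclov U nu mu x) c c')
  - 1 / (2 * a) * \sum_(mu < 4)
      (y == fwd mu x)%:R * (1%:M - gam mu) s s' * U x mu c c'
  - 1 / (2 * a) * \sum_(mu < 4)
      (y == bwd mu x)%:R * (1%:M + gam mu) s s' * adjmx (U (bwd mu x) mu) c c'.

Definition Dirac (C : numClosedFieldType) Nt Ns (gam : 'I_4 -> 'M[C]_4)
    (U : gauge C Nt Ns) (m0 csw a : C) : 'M[C]_#|var Nt Ns| :=
  \matrix_(i, j) Dker gam U m0 csw a (enum_val i) (enum_val j).

Definition spin_sign (C : numClosedFieldType) (s : 'I_4) : C :=
  if (s < 2)%N then 1 else -1.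

(* Gamma_5 = I_{n_L} (x) gamma_5 (x) I_3 *)
Definition Gamma5 (C : numClosedFieldType) Nt Ns : 'M[C]_#|var Nt Ns| :=
  \matrix_(i, j) ((i == j)%:R * spin_sign C (vspin (enum_val i))).

(* ---- aggregation: agg p = i  iff  variable p lies in aggregate A_i ---- *)
Definition is_aggregation Nt Ns s (agg : var Nt Ns -> 'I_s) : Prop :=
  forall i : 'I_s, exists p, agg p = i.

Definition gamma5_compatible Nt Ns s (agg : var Nt Ns -> 'I_s) : Prop :=
  forall p q, agg p = agg q -> (vspin p < 2)%N = (vspin q < 2)%N.

Definition restr (C : numClosedFieldType) Nt Ns s (agg : var Nt Ns -> 'I_s)
    (i : 'I_s) (w : 'cV[C]_#|var Nt Ns|) : 'cV[C]_#|var Nt Ns| :=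
  \col_k (if agg (enum_val k) == i then w k 0 else 0).

(* coarse variables: pairs (i, k), i-th aggregate, k-th vector of its basis *)
Definition coarse (s N : nat) : finType := ('I_s * 'I_N)%type.

Definition restr_block (C : numClosedFieldType) Nt Ns s N (agg : var Nt Ns -> 'I_s)
    (v : 'I_N -> 'cV[C]_#|var Nt Ns|) (i : 'I_s) : 'M[C]_(N, #|var Nt Ns|) :=
  \matrix_(k, j) restr agg i (v k) j 0.

Definition P_block (C : numClosedFieldType) Nt Ns s N
    (P : 'M[C]_(#|var Nt Ns|, #|coarse s N|)) (i : 'I_s) : 'M[C]_(N, #|var Nt Ns|) :=
  \matrix_(k, j) P j (enum_rank ((i, k) : coarse s N)).

Definition aggregation_prolongation (C : numClosedFieldType) Nt Ns s N
    (agg : var Nt Ns -> 'I_s) (v : 'I_N -> 'cV[C]_#|var Nt Ns|)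
    (P : 'M[C]_(#|var Nt Ns|, #|coarse s N|)) : Prop :=
  forall i : 'I_s,
    (forall k l : 'I_N,
       \sum_j (P j (enum_rank ((i, k) : coarse s N)))^* *
              P j (enum_rank ((i, l) : coarse s N)) = (k == l)%:R)
    /\ (P_block P i == restr_block agg v i)%MS.

Definition Gamma5c (C : numClosedFieldType) Nt Ns s N (agg : var Nt Ns -> 'I_s)
    : 'M[C]_#|coarse s N| :=
  \matrix_(c, d) ((c == d)%:R *
     (if [exists p, (agg p == (enum_val c).1) && (vspin p < 2)%N] then 1 else -1)).

Definition fov (C : numClosedFieldType) n (A : 'M[C]_n) : C -> Prop :=
  fun z => exists psi : 'cV[C]_n,
    (adjmx psi *m psi) 0 0 = 1 /\ z = (adjmx psi *m A *m psi) 0 0.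

(* Main.v *)
Require Import Defs.
From HB Require Import structures.
From mathcomp Require Import all_boot all_order all_algebra.
From mathcomp Require Import ring.
Set Implicit Arguments. Unset Strict Implicit. Unset Printing Implicit Defensive.
Import Order.TTheory GRing.Theory Num.Theory.
Local Open Scope ring_scope.


Section Adj.
Variable C : numClosedFieldType.

Lemma adjmxM m n p (A : 'M[C]_(m, n)) (B : 'M[C]_(n, p)) :
  adjmx (A *m B) = adjmx B *m adjmx A.
Proof.
apply/matrixP=> i j; rewrite !mxE rmorph_sum; apply: eq_bigr => k _.
by rewrite !mxE rmorphM mulrC.
Qed.

Lemma adjmxK m n (A : 'M[C]_(m, n)) : adjmx (adjmx A) = A.
Proof. by apply/matrixP=> i j; rewrite !mxE conjCK. Qed.

Lemma adjmxD m n (A B : 'M[C]_(m, n)) : adjmx (A + B) = adjmx A + adjmx B.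
Proof. by apply/matrixP=> i j; rewrite !mxE rmorphD. Qed.

Lemma adjmxB m n (A B : 'M[C]_(m, n)) : adjmx (A - B) = adjmx A - adjmx B.
Proof. by apply/matrixP=> i j; rewrite !mxE rmorphB. Qed.

Lemma adjmx1 n : adjmx (1%:M : 'M[C]_n) = 1%:M.
Proof. by apply/matrixP=> i j; rewrite !mxE rmorphMn rmorph1 eq_sym. Qed.
End Adj.

Lemma cshift_comm b b' n (i : 'I_n) : cshift b (cshift b' i) = cshift b' (cshift b i).
Proof. by case: b; case: b' => //=; rewrite ?ordSK ?ord_predK. Qed.

Lemma lshift_comm b b' Nt Ns mu nu (x : site Nt Ns) :
  Defs.lshift b mu (Defs.lshift b' nu x) = Defs.lshift b' nu (Defs.lshift b mu x).
Proof.
case: x => [[[x0 x1] x2] x3].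
by case: mu => [[|[|[|m]]] ?]; case: nu => [[|[|[|m']]] ?] /=; rewrite ?(cshift_comm b b').
Qed.

Lemma bwd_fwd Nt Ns mu (x : site Nt Ns) : bwd mu (fwd mu x) = x.
Proof.
case: x => [[[x0 x1] x2] x3]; rewrite /bwd /fwd.
by case: mu => [[|[|[|m]]] ?] /=; rewrite /cshift ordSK.
Qed.

Lemma fwd_bwd Nt Ns mu (x : site Nt Ns) : fwd mu (bwd mu x) = x.
Proof.
case: x => [[[x0 x1] x2] x3]; rewrite /bwd /fwd.
by case: mu => [[|[|[|m]]] ?] /=; rewrite /cshift ord_predK.
Qed.

Lemma eq_fwd_bwd Nt Ns mu (x y : site Nt Ns) : (x == fwd mu y) = (y == bwd mu x).
Proof.
apply/eqP/eqP => [->|->]; by rewrite ?bwd_fwd ?fwd_bwd.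
Qed.

Lemma Qclov_adj (C : numClosedFieldType) Nt Ns (U : gauge C Nt Ns) mu nu x :
  adjmx (Qclov U mu nu x) = Qclov U nu mu x.
Proof.
rewrite /Qclov !adjmxD !adjmxM !adjmxK !mulmxA.
have e1 : bwd mu (fwd nu x) = fwd nu (bwd mu x) by apply: lshift_comm.
have e2 : bwd nu (fwd mu x) = fwd mu (bwd nu x) by apply: lshift_comm.
have e3 : bwd mu (bwd nu x) = bwd nu (bwd mu x) by apply: lshift_comm.
rewrite e1 e2 e3.
by rewrite -!addrA; congr (_ + _); rewrite addrC [X in X + _]addrC -addrA.
Qed.



Section RingAC.
Variable R : pzRingType.
Implicit Types x y z : R.
Lemma cc x y z : x * y = y * x -> x * z = z * x -> x * (y * z) = (y * z) * x.
Proof. by move=> h1 h2; rewrite [LHS]mulrA h1 -(mulrA y x z) h2 mulrA. Qed.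
Lemma ca x y z : x * y = y * x -> x * z = - (z * x) -> x * (y * z) = - ((y * z) * x).
Proof. by move=> h1 h2; rewrite [LHS]mulrA h1 -(mulrA y x z) h2 mulrN mulrA. Qed.
Lemma ac x y z : x * y = - (y * x) -> x * z = z * x -> x * (y * z) = - ((y * z) * x).
Proof. by move=> h1 h2; rewrite [LHS]mulrA h1 mulNr -(mulrA y x z) h2 mulrA. Qed.
Lemma aa x y z : x * y = - (y * x) -> x * z = - (z * x) -> x * (y * z) = (y * z) * x.
Proof. by move=> h1 h2; rewrite [LHS]mulrA h1 mulNr -(mulrA y x z) h2 mulrN opprK mulrA. Qed.
End RingAC.

Section Gam.
Variable C : numClosedFieldType.

Lemma g5conj (M : 'M[C]_4) i j :
  (gamma5 C *m M *m gamma5 C) i j = spin_sign C i * M i j * spin_sign C j.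
Proof. by rewrite /gamma5 mul_diag_mx mul_mx_diag !mxE. Qed.

Lemma sign_sq (i : 'I_4) : spin_sign C i * spin_sign C i = 1.
Proof. by rewrite /spin_sign; case: ifP => _; rewrite ?mulr1 ?mulrNN ?mulr1. Qed.

Lemma g5_sq : gamma5 C *m gamma5 C = 1%:M.
Proof.
apply/matrixP=> i j; have := g5conj 1%:M i j; rewrite mulmx1 => ->; rewrite mxE.
case: eqP => [->|_]; first by rewrite mulr1 sign_sq.
by rewrite mulr0 mul0r.
Qed.

Variable gam : 'I_4 -> 'M[C]_4.
Hypothesis Hg : gamma_matrices gam.

Lemma gam_herm mu : adjmx (gam mu) = gam mu.
Proof. by case: Hg. Qed.

Lemma gam_anti mu nu : mu != nu -> gam mu * gam nu = - (gam nu * gam mu).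
Proof.
move=> /negbTE h; case: Hg => _ _ hc _.
have := hc mu nu; rewrite h mul0rn !mulmxE => /eqP.
by rewrite raddf0 addr_eq0 => /eqP.
Qed.

Lemma gam_g5 mu : gam mu * gamma5 C = - (gamma5 C * gam mu).
Proof.
case: Hg => _ _ _ h5; rewrite -h5 !mulmxE.
have A : forall a b : 'I_4, a != b -> gam a * gam b = - (gam b * gam a) by move=> *; apply: gam_anti.
case: mu => [[|[|[|[|m]]]] Hm] //.
- have -> : Ordinal Hm = 0 by apply: val_inj.
  by apply: ca; [apply: aa; [apply: ca; [by []|]|]|]; apply: A.
- have -> : Ordinal Hm = 1 by apply: val_inj.
  by apply: ca; [apply: aa; [apply: ac; [|by []]|]|]; apply: A.
- have -> : Ordinal Hm = 2 by apply: val_inj.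
  by apply: ca; [apply: cc; [apply: aa|by []]|]; apply: A.
- have -> : Ordinal Hm = 3 by apply: val_inj.
  by apply: ac; [apply: ca; [apply: aa|]|by []]; apply: A.
Qed.

Lemma g5_gam_g5 mu : gamma5 C *m gam mu *m gamma5 C = - gam mu.
Proof.
rewrite !mulmxE -mulrA gam_g5 mulrN mulrA -!mulmxE g5_sq.
by rewrite mul1mx.
Qed.

Lemma g5_gg_g5 mu nu : gamma5 C *m (gam mu *m gam nu) *m gamma5 C = gam mu *m gam nu.
Proof.
have e : gamma5 C *m (gam mu *m gam nu) *m gamma5 C =
  (gamma5 C *m gam mu *m gamma5 C) *m (gamma5 C *m gam nu *m gamma5 C).
  by rewrite !mulmxA -[_ *m gamma5 C *m gamma5 C]mulmxA g5_sq mulmx1.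
by rewrite e !g5_gam_g5 mulNmx mulmxN opprK.
Qed.

Lemma g5_1m mu : gamma5 C *m (1%:M - gam mu) *m gamma5 C = 1%:M + gam mu.
Proof. by rewrite mulmxBr mulmxBl mulmx1 g5_sq g5_gam_g5 opprK. Qed.

Lemma g5_1p mu : gamma5 C *m (1%:M + gam mu) *m gamma5 C = 1%:M - gam mu.
Proof. by rewrite mulmxDr mulmxDl mulmx1 g5_sq g5_gam_g5. Qed.

Lemma adj_gg mu nu : adjmx (gam mu *m gam nu) = gam nu *m gam mu.
Proof. by rewrite adjmxM !gam_herm. Qed.
End Gam.



Lemma adj_entry (C : numClosedFieldType) m n (A : 'M[C]_(m, n)) i j :
  (A j i)^* = adjmx A i j.
Proof. by rewrite mxE. Qed.

Section Conj.
Variable C : numClosedFieldType.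
Lemma conj_sum I (r : seq I) (P : pred I) (F : I -> C) :
  (\sum_(i <- r | P i) F i)^* = \sum_(i <- r | P i) (F i)^*.
Proof. by rewrite rmorph_sum. Qed.
Lemma conjM (x y : C) : (x * y)^* = x^* * y^*. Proof. by rewrite rmorphM. Qed.
Lemma conjB (x y : C) : (x - y)^* = x^* - y^*. Proof. by rewrite rmorphB. Qed.
Lemma conj0 : (0 : C)^* = 0. Proof. by rewrite rmorph0. Qed.
Lemma conjn n : (n%:R : C)^* = n%:R. Proof. by rewrite rmorph_nat. Qed.
Lemma sumMl I (r : seq I) (P : pred I) (F : I -> C) x :
  (\sum_(i <- r | P i) F i) * x = \sum_(i <- r | P i) (F i * x).
Proof. by rewrite big_distrl. Qed.
Lemma sumMr I (r : seq I) (P : pred I) (F : I -> C) x :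
  x * (\sum_(i <- r | P i) F i) = \sum_(i <- r | P i) (x * F i).
Proof. by rewrite big_distrr. Qed.
End Conj.

Section Herm.
Variables (C : numClosedFieldType) (Nt Ns : nat) (gam : 'I_4 -> 'M[C]_4)
  (U : gauge C Nt Ns) (m0 csw a : C).
Hypothesis Hg : gamma_matrices gam.
Hypotheses (rm0 : m0 \is Num.real) (rcsw : csw \is Num.real) (pa : 0 < a).

Definition T1 (x y : site Nt Ns) (c c' : 'I_3) (s s' : 'I_4) : C :=
  (x == y)%:R *
      ((m0 + 4) / a * ((c == c') && (s == s'))%:R
       - csw / (32 * a) *
         \sum_(mu < 4) \sum_(nu < 4)
            (gam mu *m gam nu) s s' * (Qclov U mu nu x - Qclov U nu mu x) c c').
Definition T2 (x y : site Nt Ns) (c c' : 'I_3) (s s' : 'I_4) : C :=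
  \sum_(mu < 4) (y == fwd mu x)%:R * (1%:M - gam mu) s s' * U x mu c c'.
Definition T3 (x y : site Nt Ns) (c c' : 'I_3) (s s' : 'I_4) : C :=
  \sum_(mu < 4) (y == bwd mu x)%:R * (1%:M + gam mu) s s' * adjmx (U (bwd mu x) mu) c c'.

Lemma DkerE p q : Dker gam U m0 csw a p q =
  T1 (vsite p) (vsite q) (vcolor p) (vcolor q) (vspin p) (vspin q)
  - 1 / (2 * a) * T2 (vsite p) (vsite q) (vcolor p) (vcolor q) (vspin p) (vspin q)
  - 1 / (2 * a) * T3 (vsite p) (vsite q) (vcolor p) (vcolor q) (vspin p) (vspin q).
Proof. by []. Qed.

Let sg := spin_sign C.

Lemma rearr (x X q y : C) : x * (X * q) * y = (x * X * y) * q.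
Proof. by ring. Qed.
Lemma rearr' (x n X q y : C) : x * (n * X * q) * y = n * (x * X * y) * q.
Proof. by ring. Qed.

Lemma ra : a \is Num.real. Proof. by apply: gtr0_real. Qed.

Lemma T1_herm x y c c' s s' :
  (T1 y x c' c s' s)^* = sg s * T1 x y c c' s s' * sg s'.
Proof.
rewrite /T1; case: (eqVneq x y) => [<-|ne]; last first.
  by rewrite !mul0r conj0 mulr0 mul0r.
rewrite !mul1r.
have eS : (\sum_(mu < 4) \sum_(nu < 4) (gam mu *m gam nu) s' s *
            (Qclov U mu nu x - Qclov U nu mu x) c' c)^* =
          \sum_(mu < 4) \sum_(nu < 4) (gam mu *m gam nu) s s' *
            (Qclov U mu nu x - Qclov U nu mu x) c c'.
  rewrite conj_sum; under eq_bigr => mu _ do rewrite conj_sum.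
  rewrite [LHS]exchange_big; apply: eq_bigr => i _; apply: eq_bigr => j _.
  by rewrite conjM !adj_entry adj_gg // adjmxB !Qclov_adj.
have eS2 : sg s * (\sum_(mu < 4) \sum_(nu < 4) (gam mu *m gam nu) s s' *
            (Qclov U mu nu x - Qclov U nu mu x) c c') * sg s' =
          \sum_(mu < 4) \sum_(nu < 4) (gam mu *m gam nu) s s' *
            (Qclov U mu nu x - Qclov U nu mu x) c c'.
  rewrite sumMr sumMl; apply: eq_bigr => mu _.
  rewrite sumMr sumMl; apply: eq_bigr => nu _.
  by rewrite rearr /sg -g5conj g5_gg_g5.
have ed : ((c' == c) && (s' == s))%:R = sg s * ((c == c') && (s == s'))%:R * sg s' :> C.
  case: (eqVneq s s') => [<-|ne]; last first.
    by rewrite !andbF mulr0 mul0r.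
  by rewrite !andbT (eq_sym c') mulrC mulrA /sg sign_sq mul1r.
have r1 : (m0 + 4) / a \is Num.real by apply: realM; [apply: realD; [exact: rm0|exact: realn]|rewrite realV; exact: ra].
have r2 : csw / (32 * a) \is Num.real by apply: realM; [exact: rcsw|rewrite realV; apply: realM; [exact: realn|exact: ra]].
rewrite conjB conjM (conj_Creal r1) conjM (conj_Creal r2) conjn eS ed -{1}eS2.

by ring.
Qed.

Lemma T2_herm x y c c' s s' :
  (T2 y x c' c s' s)^* = sg s * T3 x y c c' s s' * sg s'.
Proof.
rewrite /T2 /T3 conj_sum sumMr sumMl; apply: eq_bigr => mu _.
rewrite eq_fwd_bwd; case: eqP => [->|_]; last by rewrite !mul0r conj0 mulr0 mul0r.
rewrite !conjM conjn !adj_entry adjmxB adjmx1 gam_herm // rearr' /sg -g5conj.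
by rewrite g5_1p.
Qed.

Lemma T3_herm x y c c' s s' :
  (T3 y x c' c s' s)^* = sg s * T2 x y c c' s s' * sg s'.
Proof.
rewrite /T2 /T3 conj_sum sumMr sumMl; apply: eq_bigr => mu _.
rewrite -eq_fwd_bwd; case: eqP => [->|_]; last by rewrite !mul0r conj0 mulr0 mul0r.
rewrite bwd_fwd !conjM conjn !adj_entry adjmxK adjmxD adjmx1 gam_herm // rearr' /sg -g5conj.
by rewrite g5_1m.
Qed.

Lemma Dker_herm p q :
  (Dker gam U m0 csw a q p)^* = sg (vspin p) * Dker gam U m0 csw a p q * sg (vspin q).
Proof.
have rh : 1 / (2 * a) \is Num.real by apply: realM; [exact: real1|rewrite realV; apply: realM; [exact: realn|exact: ra]].
rewrite !DkerE !conjB !(conjM (1 / (2 * a))) (conj_Creal rh) T1_herm T2_herm T3_herm.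
by ring.
Qed.
End Herm.



Section Agg.
Variables (C : numClosedFieldType) (Nt Ns s N : nat) (agg : var Nt Ns -> 'I_s)
  (v : 'I_N -> 'cV[C]_#|var Nt Ns|) (P : 'M[C]_(#|var Nt Ns|, #|coarse s N|)).
Hypothesis hP : aggregation_prolongation agg v P.

Lemma P_support j c : P j c != 0 -> agg (enum_val j) = (enum_val c).1.
Proof.
case E: (enum_val c) => [i k] /=.
have Ec : c = enum_rank ((i, k) : coarse s N) by rewrite -E enum_valK.
have [_ /andP [h1 _]] := hP i.
case/submxP: h1 => X eX.
move/matrixP: eX => /(_ k j); rewrite !mxE -Ec => ->.
apply: contraNeq => ne; rewrite big1 // => l _; rewrite !mxE.
by rewrite (negbTE ne) mulr0.
Qed.

Lemma PHP : adjmx P *m P = 1%:M.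
Proof.
apply/matrixP => c d; rewrite !mxE.
case Ec: (enum_val c) => [i k]; case Ed: (enum_val d) => [i' l].
have ec : c = enum_rank ((i, k) : coarse s N) by rewrite -Ec enum_valK.
have ed : d = enum_rank ((i', l) : coarse s N) by rewrite -Ed enum_valK.
move: ed Ed; case: (eqVneq i i') => [<-|ne] ed Ed.
  have [ho _] := hP i.
  rewrite ec ed (inj_eq enum_rank_inj) xpair_eqE eqxx /= -(ho k l).
  apply: eq_bigr => j _; rewrite ?mxE. by congr (_ * _).
have -> : (c == d) = false.
  apply: negbTE; apply/eqP => cd; move: ne; rewrite -cd Ec in Ed.
  by case: Ed => ->; rewrite eqxx.
rewrite big1 // => j _; rewrite mxE.
case: (eqVneq (P j c) 0) => [->|nc]; first by rewrite conjC0 mul0r.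
case: (eqVneq (P j d) 0) => [->|nd]; first by rewrite mulr0.
move: (P_support nc) (P_support nd); rewrite Ec Ed /= => -> ei.
by rewrite ei eqxx in ne.
Qed.
End Agg.



Lemma sign_conj (C : numClosedFieldType) (b : bool) :
  ((if b then 1 else -1 : C))^* = if b then 1 else -1.
Proof. by case: b; rewrite ?rmorphN rmorph1. Qed.

Lemma diag_sign_herm (C : numClosedFieldType) n (f : 'I_n -> bool) :
  let M := \matrix_(i, j) ((i == j)%:R * (if f i then 1 else -1 : C)) in
  adjmx M = M /\ M *m M = 1%:M.
Proof.
move=> M; have eM : M = diag_mx (\row_i (if f i then 1 else -1)).
  apply/matrixP => i j; rewrite !mxE; case: eqP => [->|_].
    by rewrite mul1r mulr1n.
  by rewrite mul0r mulr0n.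
split.
  apply/matrixP => i j; rewrite !mxE conjM conjn sign_conj eq_sym.
  by case: eqP => [->|]; rewrite ?mul0r.
rewrite eM mul_diag_mx; apply/matrixP => i j; rewrite !mxE.
case: eqP => [->|_]; last by rewrite !mulr0n mulr0.
by rewrite !mulr1n; case: (f j); rewrite ?mulr1 ?mulrNN ?mulr1.
Qed.

Section Main.
Variables (C : numClosedFieldType) (Nt Ns s N : nat) (agg : var Nt Ns -> 'I_s)
  (v : 'I_N -> 'cV[C]_#|var Nt Ns|) (P : 'M[C]_(#|var Nt Ns|, #|coarse s N|)).
Hypothesis hP : aggregation_prolongation agg v P.
Hypothesis hc : gamma5_compatible agg.

Lemma G5E : Gamma5 C Nt Ns =
  \matrix_(i, j) ((i == j)%:R * (if (vspin (enum_val i) < 2)%N then 1 else -1 : C)).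
Proof. by []. Qed.

Lemma G5cE : Gamma5c C N agg =
  \matrix_(i, j) ((i == j)%:R *
   (if [exists p, (agg p == (enum_val i).1) && (vspin p < 2)%N] then 1 else -1 : C)).
Proof. by []. Qed.

Lemma G5P : Gamma5 C Nt Ns *m P = P *m Gamma5c C N agg.
Proof.
apply/matrixP => j c; rewrite !mxE.
rewrite (bigD1 j) //= big1 => [|k /negbTE nk]; last by rewrite !mxE eq_sym nk !mul0r.
rewrite (bigD1 c) //= [X in _ = _ + X]big1 => [|k /negbTE nk]; last by rewrite !mxE nk mul0r mulr0.
rewrite !mxE !eqxx !mul1r !addr0.
case: (eqVneq (P j c) 0) => [->|nz]; first by rewrite mulr0 mul0r.
have ea := P_support hP nz.
rewrite /spin_sign; case: (boolP (vspin (enum_val j) < 2)%N) => hs.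
  have -> : [exists p, (agg p == (enum_val c).1) && (vspin p < 2)%N].
    by apply/existsP; exists (enum_val j); rewrite ea eqxx hs.
  by rewrite mul1r mulr1.
have -> : [exists p, (agg p == (enum_val c).1) && (vspin p < 2)%N] = false.
  apply/negbTE/existsP => -[p /andP [/eqP ep hp]].
  by move: (hc (etrans ep (esym ea))); rewrite hp (negbTE hs).
by rewrite mulrN1 mulN1r.
Qed.
End Main.

Unset Implicit Arguments.
Theorem lemma3p3 (C : numClosedFieldType) (Nt Ns : nat)
    (gam : 'I_4 -> 'M[C]_4) (U : gauge C Nt Ns) (m0 csw a : C)
    (s N : nat) (agg : var Nt Ns -> 'I_s) (v : 'I_N -> 'cV[C]_#|var Nt Ns|)
    (P : 'M[C]_(#|var Nt Ns|, #|coarse s N|)) :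
  (0 < Nt)%N -> (0 < Ns)%N ->
  gamma_matrices gam ->
  (forall x mu, SU3 (U x mu)) ->
  m0 \is Num.real -> csw \is Num.real -> 0 < a ->
  is_aggregation agg -> gamma5_compatible agg ->
  (forall i, row_free (restr_block agg v i)) ->
  aggregation_prolongation agg v P ->
  let D := Dirac gam U m0 csw a in
  let R := adjmx (Gamma5 C Nt Ns *m P) in
  let DcPG := R *m D *m P in
  let Dc := adjmx P *m D *m P in
  let G5c := Gamma5c C N agg in
  [/\ Dc = G5c *m DcPG,
      Dc \in unitmx -> DcPG \in unitmx ->
        1%:M - P *m invmx Dc *m adjmx P *m D = 1%:M - P *m invmx DcPG *m R *m D,
      adjmx DcPG = DcPG /\ adjmx (G5c *m Dc) = G5c *m Dc
    & forall z, fov Dc z -> fov D z].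
Proof.
move=> _ _ Hg _ rm0 rcsw pa _ hc _ hP D R DcPG Dc G5c.
set G5 := Gamma5 C Nt Ns.
have [hG5 sq5] : adjmx G5 = G5 /\ G5 *m G5 = 1%:M by rewrite /G5 G5E; apply: diag_sign_herm.
have [hG5c sqc] : adjmx G5c = G5c /\ G5c *m G5c = 1%:M by rewrite /G5c G5cE; apply: diag_sign_herm.
have GP : G5 *m P = P *m G5c by apply: G5P.
have PP : adjmx P *m P = 1%:M by apply: PHP hP.
have DH : adjmx D = G5 *m D *m G5.
  have eG : G5 = diag_mx (\row_i spin_sign C (vspin (enum_val i))).
    apply/matrixP => i j; rewrite !mxE; case: eqP => [->|_].
      by rewrite mul1r mulr1n.
    by rewrite mul0r mulr0n.
  apply/matrixP => i j; rewrite eG mul_diag_mx mul_mx_diag !mxE.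
  exact: (Dker_herm U Hg rm0 rcsw pa).
have ER : R = G5c *m adjmx P by rewrite /R GP adjmxM hG5c.
have ER' : R = adjmx P *m G5 by rewrite /R adjmxM hG5.
have E1 : Dc = G5c *m DcPG by rewrite /DcPG ER !mulmxA sqc mul1mx.
have HD : adjmx DcPG = DcPG.
  rewrite /DcPG ER' !adjmxM adjmxK hG5 DH !mulmxA.
  by rewrite -[adjmx P *m G5 *m D *m G5 *m G5]mulmxA sq5 mulmx1.
split => //.
- move=> uDc uDcPG.
  have einv : invmx Dc = invmx DcPG *m G5c.
    have h : invmx DcPG *m G5c *m Dc = 1%:M.
      by rewrite E1 -[_ *m (G5c *m DcPG)]mulmxA [G5c *m _]mulmxA sqc mul1mx mulVmx.
    by rewrite -[LHS]mul1mx -h -mulmxA mulmxV // mulmx1.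
  by rewrite einv ER !mulmxA.
- by rewrite E1 mulmxA sqc mul1mx.
- move=> z [psi [h1 ->]]; exists (P *m psi); split.
    by rewrite adjmxM -[_ *m (P *m psi)]mulmxA [adjmx P *m _]mulmxA PP mul1mx.
  by rewrite /Dc adjmxM !mulmxA.
Qed.
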